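(* Let $I=\ker\big(S\otimes_{\mathbf C}S\to\mathbf C[\mathcal M_{\ge0}]\otimes_{\mathbf C}S\big)$ be as in the context. Then $I$ is generated as an ideal of $S\otimes_{\mathbf C}S$ by \[ \{\,x^D\otimes x^E - x^E\otimes x^D \;\mid\; D,E\in\tilde M_{\ge0},\ [D]=[E]\,\}, \] and, if for each chamber $\Gamma$ of the arrangement $\mathcal A$ a set $\Xi_\Gamma$ of generators of the semigroup $M\cap\Gamma$ is chosen, also by \[ \{\,x^{D^+(m)}\otimes x^{D^-(m)} - x^{D^-(m)}\otimes x^{D^+(m)} \;\mid\; m\in\textstyle\bigcup_\Gamma\Xi_\Gamma\,\}, \] the union being over all chambers $\Gamma$.
   Context: Let $M=\mathbf Z^r$, $N=\mathrm{Hom}_{\mathbf Z}(M,\mathbf Z)$ with pairing $\langle\ ,\ \rangle$, and let $\Sigma$ be a finite complete fan in $N_{\mathbf R}$ (defining a complete toric variety $X$ over $\mathbf C$). Let $\rho_1,\dots,\rho_l$ be the one-dimensional cones of $\Sigma$ and $n_j\in N$ the primitive generator of $\rho_j$. Let $\tilde M$ be the free $\mathbf Z$-module with basis $\tilde m_1,\dots,\tilde m_l$, let $\pi^*:M\to\tilde M$, $\pi^*(m)=\sum_j\langle m,n_j\rangle\tilde m_j$, let $\mathcal M=\mathrm{coker}(\pi^* )$ and $\mu_j\in\mathcal M$ the image of $\tilde m_j$. Let $\tilde M_{\ge0}=\sum_j\mathbf Z_{\ge0}\tilde m_j$ and $\mathcal M_{\ge0}=\sum_j\mathbf Z_{\ge0}\mu_j$.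 Let $S=\mathbf C[x_1,\dots,x_l]$, graded by $\deg x_j=\mu_j$. For $D=\sum_j a_j\tilde m_j\in\tilde M_{\ge0}$ put $x^D=\prod_j x_j^{a_j}$ and $[D]=\sum_j a_j\mu_j$. For $m\in M$ put $D^+(m)=\sum_{\langle m,n_j\rangle>0}\langle m,n_j\rangle\tilde m_j$ and $D^-(m)=\sum_{\langle m,n_j\rangle<0}(-\langle m,n_j\rangle)\tilde m_j$. The $\mathbf C$-algebra homomorphism $S\otimes_{\mathbf C}S\to\mathbf C[\mathcal M_{\ge0}]\otimes_{\mathbf C}S$ is defined by $x^D\otimes x^E\mapsto\mathbf e([D])\otimes x^{D+E}$, where $\mathbf e(\alpha)$ denotes the basis element of the semigroup algebra $\mathbf C[\mathcal M_{\ge0}]$ corresponding to $\alpha$. Let $\mathcal A$ be the arrangement of hyperplanes $\{m\in\mathbf R^r:\langle m,n_j\rangle=0\}$, $j=1,\dots,l$; a chamber is a closed top-dimensional polyhedral cone of the partition of $\mathbf R^r$ induced by $\mathcal A$. *)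

(* Defs.v *)
From HB Require Import structures.
From mathcomp Require Import all_boot all_order all_algebra.
From Stdlib Require Import ClassicalEpsilon.
Set Implicit Arguments. Unset Strict Implicit. Unset Printing Implicit Defensive.
Import Order.TTheory GRing.Theory Num.Theory.
Local Open Scope ring_scope.

(* M = Z^r : integer vectors; N = Hom(M,Z) identified with Z^r via the
   standard pairing. *)
Definition vec (r : nat) := {ffun 'I_r -> int}.
Definition pairing (r : nat) (m v : vec r) : int := \sum_(i < r) m i * v i.

(* A finite family of vectors is
   the family of ray generators of some complete fan iff the vectors are
   primitive, pairwise distinct and their nonnegative span is all of N_R
   (equivalently, for rational data, of N_Q). *)
Definition primitive (r : nat) (v : vec r) : Prop :=
  forall k : int, (forall i, (k %| v i)%Z) -> `|k| = 1.

Definition complete_fan_rays (r l : nat) (n : 'I_l -> vec r) : Prop :=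
  [/\ forall j, primitive (n j),
      injective n &
      forall v : vec r, exists c : 'I_l -> rat,
        (forall j, 0 <= c j) /\
        forall i, (v i)%:~R = \sum_(j < l) c j * (n j i)%:~R].

(* Elements of tilde M_{>=0}: effective divisors sum a_j m_j, a_j in N. *)
Definition divisor (l : nat) := {ffun 'I_l -> nat}.
Definition addD (l : nat) (D E : divisor l) : divisor l := [ffun j => (D j + E j)%N].

(* [D] = [E] in calM = coker(pi^star) *)
Definition sameclass (r l : nat) (n : 'I_l -> vec r) (D E : divisor l) : Prop :=
  exists m : vec r, forall j, (D j)%:Z - (E j)%:Z = pairing m (n j).

Definition Dplus (r l : nat) (n : 'I_l -> vec r) (m : vec r) : divisor l :=
  [ffun j => let s := pairing m (n j) in if 0 < s then `|s|%N else 0%N].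
Definition Dminus (r l : nat) (n : 'I_l -> vec r) (m : vec r) : divisor l :=
  [ffun j => let s := pairing m (n j) in if s < 0 then `|s|%N else 0%N].

(* S (x) S = C[x_1..x_l] (x) C[x_1..x_l]: its monomials are x^D (x) x^E,
   indexed by pairs (D,E).  An element is represented as a finite formal
   sum (list of (coefficient, monomial)); two representations denote the same
   element iff all their coefficients agree (peq). *)
Definition mon (l : nat) := (divisor l * divisor l)%type.
Definition tpoly (C : ringType) (l : nat) := seq (C * mon l).

Definition coef (C : ringType) (l : nat) (p : tpoly C l) (u : mon l) : C :=
  \sum_(t <- p | t.2 == u) t.1.
Definition peq (C : ringType) (l : nat) (p q : tpoly C l) : Prop :=
  forall u, coef p u = coef q u.
Definition padd (C : ringType) (l : nat) (p q : tpoly C l) : tpoly C l := p ++ q.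
Definition pmul (C : ringType) (l : nat) (p q : tpoly C l) : tpoly C l :=
  [seq (a.1 * b.1, (addD a.2.1 b.2.1, addD a.2.2 b.2.2)) | a <- p, b <- q].

Definition binom (C : ringType) (l : nat) (D E : divisor l) : tpoly C l :=
  [:: (1, (D, E)); (-1, (E, D))].

Definition in_ideal (C : ringType) (l : nat) (G : tpoly C l -> Prop) (p : tpoly C l) : Prop :=
  exists rs : seq (tpoly C l * tpoly C l),
    (forall x, x \in rs -> G x.2) /\
    peq p (foldr (fun x acc => padd (pmul x.1 x.2) acc) [::] rs).

Definition pbool (P : Prop) : bool :=
  if excluded_middle_informative P then true else false.

(* The map S(x)S -> C[calM_{>=0}] (x) S, x^D (x) x^E |-> e([D]) (x) x^{D+E}.
   The coefficient of the basis element e([D0]) (x) x^F in the image of p is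
   the sum of the coefficients of the monomials x^D (x) x^E of p with
   [D] = [D0] and D + E = F; p is in the kernel iff all these vanish. *)
Definition image_coef (C : ringType) (r l : nat) (n : 'I_l -> vec r)
    (p : tpoly C l) (D0 F : divisor l) : C :=
  \sum_(t <- p | (addD t.2.1 t.2.2 == F) && pbool (sameclass n t.2.1 D0)) t.1.

Definition in_kernel (C : ringType) (r l : nat) (n : 'I_l -> vec r) (p : tpoly C l) : Prop :=
  forall D0 F : divisor l, image_coef n p D0 F = 0.

(* Chambers of the arrangement {<m,n_j> = 0}: a chamber is determined by a
   sign vector s (true = positive side) realized by some point in the open
   region; the closed chamber meets M in the points below. *)
Definition is_chamber (r l : nat) (n : 'I_l -> vec r) (s : 'I_l -> bool) : Prop :=
  exists m : vec r, forall j,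
    if s j then 0 < pairing m (n j) else pairing m (n j) < 0.
Definition in_chamber (r l : nat) (n : 'I_l -> vec r) (s : 'I_l -> bool) (m : vec r) : Prop :=
  forall j, if s j then 0 <= pairing m (n j) else pairing m (n j) <= 0.

Definition semigroup_generators (r l : nat) (n : 'I_l -> vec r) (s : 'I_l -> bool)
    (Xi : vec r -> Prop) : Prop :=
  (forall m, Xi m -> in_chamber n s m) /\
  (forall m, in_chamber n s m ->
     exists xs : seq (vec r), (forall x, x \in xs -> Xi x) /\ m = \sum_(x <- xs) x).

Definition gens1 (C : ringType) (r l : nat) (n : 'I_l -> vec r) (g : tpoly C l) : Prop :=
  exists D E : divisor l, sameclass n D E /\ g = binom C D E.

Definition gens2 (C : ringType) (r l : nat) (n : 'I_l -> vec r)
    (Xi : ('I_l -> bool) -> vec r -> Prop) (g : tpoly C l) : Prop :=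
  exists (s : 'I_l -> bool) (m : vec r),
    [/\ is_chamber n s, Xi s m & g = binom C (Dplus n m) (Dminus n m)].

(* Main.v *)
Require Import Defs.
From mathcomp Require Import all_boot all_order all_algebra.
From mathcomp Require Import zify ring.
From Stdlib Require Import ClassicalEpsilon.
Set Implicit Arguments. Unset Strict Implicit. Unset Printing Implicit Defensive.
Import Order.TTheory GRing.Theory Num.Theory.
Local Open Scope ring_scope.

Definition mm (l : nat) (w1 w2 : mon l) : mon l := (addD w1.1 w2.1, addD w1.2 w2.2).
Definition zeroD (l : nat) : divisor l := [ffun => 0%N].

Lemma coef_nil (C : ringType) l (u : mon l) : coef ([::] : tpoly C l) u = 0.
Proof. by rewrite /coef big_nil. Qed.

Lemma coef_cons (C : ringType) l (t : C * mon l) p u :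
  coef (t :: p) u = (if t.2 == u then t.1 else 0) + coef p u.
Proof. by rewrite /coef big_cons; case: ifP; rewrite ?add0r. Qed.

Lemma coef_cat (C : ringType) l (p q : tpoly C l) u :
  coef (p ++ q) u = coef p u + coef q u.
Proof. by rewrite /coef big_cat. Qed.

Lemma sum_pmul (C : ringType) l (p q : tpoly C l) (F : C * mon l -> C) :
  \sum_(x <- pmul p q) F x =
  \sum_(a <- p) \sum_(b <- q) F (a.1 * b.1, mm a.2 b.2).
Proof.
elim: p => [|a p IH]; first by rewrite /pmul /= !big_nil.
by rewrite /pmul /= big_cat big_map -/(pmul p q) IH big_cons.
Qed.

Lemma coef_pmul (C : ringType) l (p q : tpoly C l) u :
  coef (pmul p q) u =
  \sum_(a <- p) \sum_(b <- q) (if mm a.2 b.2 == u then a.1 * b.1 else 0).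
Proof. by rewrite /coef big_mkcond /= sum_pmul. Qed.

Lemma mmA l (a b c : mon l) : mm (mm a b) c = mm a (mm b c).
Proof. by rewrite /mm /addD /=; congr pair; apply/ffunP => j; rewrite !ffunE addnA. Qed.

Lemma mm0 l (b : mon l) : mm (zeroD l, zeroD l) b = b.
Proof. by case: b => b1 b2; rewrite /mm /addD /=; congr pair; apply/ffunP => j; rewrite !ffunE. Qed.

Lemma sum_coef (C : ringType) l (U : seq (mon l)) (phi : pred (mon l)) (p : tpoly C l) :
  uniq U -> {subset map snd p <= U} ->
  \sum_(t <- p | phi t.2) t.1 = \sum_(u <- U | phi u) coef p u.
Proof.
move=> uU; elim: p => [|t p IH] sub.
  by rewrite big_nil big1 // => u _; rewrite coef_nil.
have tU : t.2 \in U by apply: sub; rewrite inE eqxx.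
rewrite big_cons IH; last by move=> x xp; apply: sub; rewrite inE xp orbT.
under [in RHS]eq_bigr => u _ do rewrite coef_cons.
rewrite big_split /= [X in _ = X + _](big_rem t.2) //= eqxx.
rewrite [X in _ = _ + X + _]big1_seq ?addr0; first by case: ifP; rewrite ?add0r.
move=> u /andP[_ uin]; case: eqP => // eu.
by move: uin; rewrite -eu mem_rem_uniqF.
Qed.

Lemma sum_peq (C : ringType) l (phi : pred (mon l)) (p q : tpoly C l) :
  peq p q -> \sum_(t <- p | phi t.2) t.1 = \sum_(t <- q | phi t.2) t.1.
Proof.
move=> e; pose U := undup (map snd (p ++ q)).
have uU : uniq U by apply: undup_uniq.
rewrite (@sum_coef _ _ U) //; last by move=> x xp; rewrite mem_undup map_cat mem_cat xp.
rewrite (@sum_coef _ _ U) //; last by move=> x xp; rewrite mem_undup map_cat mem_cat xp orbT.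
by apply: eq_bigr => u _; rewrite e.
Qed.

Lemma peq_refl (C : ringType) l (p : tpoly C l) : peq p p.
Proof. by []. Qed.
Lemma peq_sym (C : ringType) l (p q : tpoly C l) : peq p q -> peq q p.
Proof. by move=> e u; rewrite e. Qed.
Lemma peq_trans (C : ringType) l (p q s : tpoly C l) : peq p q -> peq q s -> peq p s.
Proof. by move=> e1 e2 u; rewrite e1 e2. Qed.

Lemma pmul_peq_r (C : ringType) l (a q q' : tpoly C l) :
  peq q q' -> peq (pmul a q) (pmul a q').
Proof.
move=> e u; rewrite !coef_pmul; apply: eq_bigr => x _.
rewrite -!big_mkcond /= -!mulr_sumr.
congr (_ * _).
exact: (sum_peq (fun w => mm x.2 w == u) e).
Qed.

Lemma pmul_assoc (C : ringType) l (a b c : tpoly C l) :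
  peq (pmul (pmul a b) c) (pmul a (pmul b c)).
Proof.
move=> u; rewrite !coef_pmul sum_pmul.
apply: eq_bigr => x _; rewrite big_mkcond /= sum_pmul.
under eq_bigr => y _ do rewrite big_mkcond.
apply: eq_bigr => y _; apply: eq_bigr => z _ /=.
by rewrite mmA mulrA.
Qed.

Lemma pmul_cat_r (C : ringType) l (a p q : tpoly C l) :
  peq (pmul a (p ++ q)) (pmul a p ++ pmul a q).
Proof.
move=> u; rewrite coef_cat !coef_pmul -big_split /=.
by apply: eq_bigr => x _; rewrite big_cat.
Qed.

Lemma pmul_nil_r (C : ringType) l (a : tpoly C l) : peq (pmul a [::]) [::].
Proof. by move=> u; rewrite coef_pmul coef_nil big1 // => x _; rewrite big_nil. Qed.

Definition fsum (C : ringType) l (rs : seq (tpoly C l * tpoly C l)) : tpoly C l :=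
  foldr (fun x acc => padd (pmul x.1 x.2) acc) [::] rs.

Lemma fsum_cat (C : ringType) l (rs1 rs2 : seq (tpoly C l * tpoly C l)) :
  fsum (rs1 ++ rs2) = fsum rs1 ++ fsum rs2.
Proof. by elim: rs1 => //= x rs IH; rewrite /padd IH catA. Qed.

Lemma in_idealE (C : ringType) l (G : tpoly C l -> Prop) p :
  in_ideal G p <-> exists rs, (forall x, x \in rs -> G x.2) /\ peq p (fsum rs).
Proof. by []. Qed.

Lemma ideal_peq (C : ringType) l (G : tpoly C l -> Prop) p q :
  peq p q -> in_ideal G q -> in_ideal G p.
Proof. by move=> e [rs [H1 H2]]; exists rs; split => //; apply: peq_trans e H2. Qed.

Lemma ideal_nil (C : ringType) l (G : tpoly C l -> Prop) : in_ideal G [::].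
Proof. by exists [::]. Qed.

Lemma ideal_add (C : ringType) l (G : tpoly C l -> Prop) p q :
  in_ideal G p -> in_ideal G q -> in_ideal G (p ++ q).
Proof.
move=> [rs1 [H1 E1]] [rs2 [H2 E2]]; exists (rs1 ++ rs2); split.
  by move=> x; rewrite mem_cat => /orP[/H1|/H2].
rewrite -/(fsum _) fsum_cat => u; rewrite !coef_cat E1 E2.
done.
Qed.

Lemma ideal_gen (C : ringType) l (G : tpoly C l -> Prop) g :
  G g -> in_ideal G g.
Proof.
move=> Gg; exists [:: ([:: (1, (zeroD l, zeroD l))], g)]; split.
  by move=> x; rewrite inE => /eqP ->.
move=> u /=; rewrite /padd cats0 coef_pmul big_seq1 /coef big_mkcond /=.
by apply: eq_bigr => b _; rewrite mm0 mul1r.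
Qed.

Lemma ideal_mul (C : ringType) l (G : tpoly C l -> Prop) a q :
  in_ideal G q -> in_ideal G (pmul a q).
Proof.
move=> [rs [H1 E1]]; exists [seq (pmul a x.1, x.2) | x <- rs]; split.
  move=> x /mapP[y yin ->] /=; exact: H1 yin.
apply: peq_trans (pmul_peq_r a E1) _.
rewrite -/(fsum _); elim: rs {H1 E1} => [|x rs IH] /=; first exact: pmul_nil_r.
rewrite /padd; apply: peq_trans (pmul_cat_r _ _ _) _.
by move=> u; rewrite !coef_cat IH pmul_assoc.
Qed.

Lemma ideal_mono (C : ringType) l (G G' : tpoly C l -> Prop) p :
  (forall g, G g -> G' g) -> in_ideal G p -> in_ideal G' p.
Proof. by move=> H [rs [H1 E1]]; exists rs; split => // x /H1 /H. Qed.

Lemma pboolP (P : Prop) : pbool P = true <-> P.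
Proof. by rewrite /pbool; case: excluded_middle_informative. Qed.

Lemma pbool_eq (P Q : Prop) : (P <-> Q) -> pbool P = pbool Q.
Proof.
move=> [H1 H2]; rewrite /pbool.
by case: excluded_middle_informative; case: excluded_middle_informative => // ? ?; [exfalso; auto|exfalso; auto].
Qed.

Lemma pairing_add r (m1 m2 v : vec r) : pairing (m1 + m2) v = pairing m1 v + pairing m2 v.
Proof. by rewrite /pairing -big_split; apply: eq_bigr => i _; rewrite ffunE mulrDl. Qed.

Lemma pairing_opp r (m v : vec r) : pairing (- m) v = - pairing m v.
Proof. by rewrite /pairing -sumrN; apply: eq_bigr => i _; rewrite ffunE mulNr. Qed.

Lemma pairing0 r (v : vec r) : pairing 0 v = 0.
Proof. by rewrite /pairing big1 // => i _; rewrite ffunE mul0r. Qed.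

Lemma pairing_sum r (xs : seq (vec r)) v :
  pairing (\sum_(x <- xs) x) v = \sum_(x <- xs) pairing x v.
Proof.
elim: xs => [|x xs IH]; first by rewrite !big_nil pairing0.
by rewrite !big_cons pairing_add IH.
Qed.

Lemma sameclass_refl r l (n : 'I_l -> vec r) D : sameclass n D D.
Proof. by exists 0 => j; rewrite pairing0 subrr. Qed.

Lemma sameclass_sym r l (n : 'I_l -> vec r) D E : sameclass n D E -> sameclass n E D.
Proof. by move=> [m Hm]; exists (- m) => j; rewrite pairing_opp -Hm opprB. Qed.

Lemma sameclass_trans r l (n : 'I_l -> vec r) D E F :
  sameclass n D E -> sameclass n E F -> sameclass n D F.
Proof.
move=> [m1 H1] [m2 H2]; exists (m1 + m2) => j.
by rewrite pairing_add -H1 -H2 addrA subrK.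
Qed.

Lemma sameclass_addl r l (n : 'I_l -> vec r) B D E :
  sameclass n D E -> sameclass n (addD B D) (addD B E).
Proof.
move=> [m Hm]; exists m => j; rewrite -Hm !ffunE !PoszD.
by rewrite opprD addrACA subrr add0r.
Qed.

Lemma image_coef_peq (C : ringType) r l (n : 'I_l -> vec r) (p q : tpoly C l) D0 F :
  peq p q -> image_coef n p D0 F = image_coef n q D0 F.
Proof.
move=> e; exact: (sum_peq (fun w => (addD w.1 w.2 == F) && pbool (sameclass n w.1 D0)) e).
Qed.

Lemma image_coef_cat (C : ringType) r l (n : 'I_l -> vec r) (p q : tpoly C l) D0 F :
  image_coef n (p ++ q) D0 F = image_coef n p D0 F + image_coef n q D0 F.
Proof. by rewrite /image_coef big_cat. Qed.

Lemma image_coef_binom (C : ringType) r l (n : 'I_l -> vec r) (a : tpoly C l) D E D0 F :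
  sameclass n D E -> image_coef n (pmul a (binom C D E)) D0 F = 0.
Proof.
move=> sDE; rewrite /image_coef big_mkcond /= sum_pmul big1 // => b _.
rewrite big_cons big_seq1 /= mulr1 mulrN1.
have -> : addD (addD b.2.1 E) (addD b.2.2 D) = addD (addD b.2.1 D) (addD b.2.2 E).
  by apply/ffunP => j; rewrite !ffunE; lia.
have -> : pbool (sameclass n (addD b.2.1 E) D0) = pbool (sameclass n (addD b.2.1 D) D0).
  apply: pbool_eq; split => H.
    by apply: sameclass_trans H; apply: sameclass_addl.
  by apply: sameclass_trans H; apply: sameclass_addl; apply: sameclass_sym.
by case: ifP => _; rewrite ?subrr ?addr0.
Qed.

Lemma ideal1_kernel (C : ringType) r l (n : 'I_l -> vec r) (p : tpoly C l) :
  in_ideal (@gens1 C r l n) p -> in_kernel n p.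
Proof.
move=> [rs [H1 E1]] D0 F; rewrite (@image_coef_peq _ _ _ n _ _ D0 F E1).
elim: rs H1 {E1} => [|x rs IH] H1 /=; first by rewrite /image_coef big_nil.
rewrite /padd image_coef_cat IH; last by move=> y yin; apply: H1; rewrite inE yin orbT.
have [D [E [sDE ->]]] : gens1 n x.2 by apply: H1; rewrite inE eqxx.
by rewrite image_coef_binom // add0r.
Qed.

Definition keyb r l (n : 'I_l -> vec r) (u v : mon l) : bool :=
  (addD u.1 u.2 == addD v.1 v.2) && pbool (sameclass n u.1 v.1).

Lemma keyb_refl r l (n : 'I_l -> vec r) u : keyb n u u.
Proof. by rewrite /keyb eqxx /=; apply/pboolP/sameclass_refl. Qed.

Lemma keyb_sym r l (n : 'I_l -> vec r) u v : keyb n u v -> keyb n v u.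
Proof.
by rewrite /keyb => /andP[/eqP -> /pboolP H]; rewrite eqxx /=; apply/pboolP/sameclass_sym.
Qed.

Lemma keyb_trans r l (n : 'I_l -> vec r) u v w : keyb n u v -> keyb n v w -> keyb n u w.
Proof.
rewrite /keyb => /andP[/eqP -> /pboolP H] /andP[/eqP -> /pboolP H'].
by rewrite eqxx /=; apply/pboolP; apply: sameclass_trans H H'.
Qed.

Definition rep (C : ringType) r l (n : 'I_l -> vec r) (p : tpoly C l) (t : C * mon l) : mon l :=
  (nth t p (find (fun s => keyb n s.2 t.2) p)).2.

Lemma rep_key (C : ringType) r l (n : 'I_l -> vec r) (p : tpoly C l) t :
  t \in p -> keyb n (rep n p t) t.2.
Proof.
move=> tp; rewrite /rep; apply: (nth_find t (a := fun s => keyb n s.2 t.2)).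
by apply/hasP; exists t => //; apply: keyb_refl.
Qed.

Lemma rep_eq (C : ringType) r l (n : 'I_l -> vec r) (p : tpoly C l) t t0 :
  t \in p -> keyb n t.2 t0.2 -> rep n p t = rep n p t0.
Proof.
move=> tp k; rewrite /rep.
have -> : find (fun s => keyb n s.2 t.2) p = find (fun s => keyb n s.2 t0.2) p.
  apply: eq_find => s; apply/idP/idP => H.
    exact: keyb_trans H k.
  exact: keyb_trans H (keyb_sym k).
rewrite (set_nth_default t0) //.
rewrite -has_find; apply/hasP; exists t => //; exact: k.
Qed.

Lemma rep_sum (C : ringType) r l (n : 'I_l -> vec r) (p : tpoly C l) u :
  in_kernel n p -> \sum_(t <- p) (if rep n p t == u then t.1 else 0) = 0.
Proof.
move=> Hk; case: (boolP (has (fun t => rep n p t == u) p)).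
  move=> /hasP[t0 t0p /eqP <-].
  rewrite (eq_big_seq (fun t => if keyb n t.2 t0.2 then t.1 else 0)).
    rewrite -big_mkcond; exact: (Hk t0.2.1 (addD t0.2.1 t0.2.2)).
  move=> t tp /=; congr (if _ then _ else _); apply/idP/idP.
    move=> /eqP e; apply: keyb_trans (keyb_sym (@rep_key _ _ _ n _ _ tp)) _.
    by rewrite e; apply: rep_key.
  by move=> k; rewrite (rep_eq tp k).
move=> /hasPn H; rewrite big1_seq // => t /andP[_ tp].
by move: (H t tp) => /negbTE ->.
Qed.

Definition gD l (w w1 : mon l) : divisor l := [ffun j => minn (w.1 j) (w1.1 j)].
Definition aD l (w w1 : mon l) : divisor l := [ffun j => (w.1 j - minn (w.1 j) (w1.1 j))%N].
Definition a1D l (w w1 : mon l) : divisor l := [ffun j => (w1.1 j - minn (w.1 j) (w1.1 j))%N].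
Definition hD l (w w1 : mon l) : divisor l := [ffun j => (w.2 j - a1D w w1 j)%N].

Lemma decomp l (w w1 : mon l) : addD w.1 w.2 = addD w1.1 w1.2 ->
  mm (gD w w1, hD w w1) (aD w w1, a1D w w1) = w /\
  mm (gD w w1, hD w w1) (a1D w w1, aD w w1) = w1.
Proof.
case: w w1 => [D E] [D1 E1] /= /ffunP e; rewrite /mm /=; split; congr pair;
  apply/ffunP => j; move: (e j); rewrite /gD /aD /a1D /hD /addD !ffunE /=; lia.
Qed.

Lemma decomp_class r l (n : 'I_l -> vec r) (w w1 : mon l) :
  sameclass n w.1 w1.1 -> sameclass n (aD w w1) (a1D w w1).
Proof. by move=> [m Hm]; exists m => j; rewrite -Hm !ffunE; lia. Qed.

Lemma decomp_disj l (w w1 : mon l) j : (aD w w1 j = 0 \/ a1D w w1 j = 0)%N.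
Proof. rewrite !ffunE; lia. Qed.

Lemma coef_flatten (C : ringType) l (ps : seq (tpoly C l)) u :
  coef (flatten ps) u = \sum_(q <- ps) coef q u.
Proof.
elim: ps => [|q ps IH]; first by rewrite big_nil coef_nil.
by rewrite /= coef_cat IH big_cons.
Qed.

Lemma kernel_ideal (C : ringType) r l (n : 'I_l -> vec r) (G : tpoly C l -> Prop) :
  (forall A A1, sameclass n A A1 -> (forall j, A j = 0 \/ A1 j = 0)%N ->
     in_ideal G (binom C A A1)) ->
  forall p, in_kernel n p -> in_ideal G p.
Proof.
move=> HG p Hk.
pose f t := pmul [:: (t.1, (gD t.2 (rep n p t), hD t.2 (rep n p t)))]
                 (binom C (aD t.2 (rep n p t)) (a1D t.2 (rep n p t))).
apply: (@ideal_peq _ _ _ _ (flatten [seq f t | t <- p])).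
  move=> u; rewrite coef_flatten big_map.
  rewrite (eq_big_seq (fun t => (if t.2 == u then t.1 else 0) -
                                 (if rep n p t == u then t.1 else 0))).
    by rewrite sumrB rep_sum // subr0 /coef big_mkcond.
  move=> t tp; rewrite /f coef_pmul big_seq1 big_cons big_seq1 /=.
  have k := @rep_key _ _ _ n _ _ tp.
  move: (k) => /andP[/eqP e _].
  have [-> ->] := decomp (esym e).
  by rewrite mulr1 mulrN1; case: ifP; case: ifP; rewrite ?subr0 ?sub0r ?add0r ?addr0.
have : forall t, t \in p -> in_ideal G (f t).
  move=> t tp; apply: ideal_mul; apply: HG; last exact: decomp_disj.
  apply: decomp_class; apply: sameclass_sym.
  by move: (@rep_key _ _ _ n _ _ tp) => /andP[_ /pboolP].
move=> H; have : {subset p <= p} by [].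
elim: {1 3}p => [|t ps IH] sub; first exact: ideal_nil.
rewrite map_cons; change (in_ideal G (f t ++ flatten [seq f t | t <- ps])); apply: ideal_add; first by apply: H; apply: sub; rewrite inE eqxx.
by apply: IH => x xp; apply: sub; rewrite inE xp orbT.
Qed.

Lemma addDC l (A B : divisor l) : addD A B = addD B A.
Proof. by apply/ffunP => j; rewrite !ffunE addnC. Qed.

Lemma binom_peq0 (C : ringType) l : peq (binom C (zeroD l) (zeroD l)) [::].
Proof. by move=> u; rewrite !coef_cons coef_nil; case: ifP; rewrite ?addr0 ?subrr. Qed.

Lemma binom_tele (C : ringType) l (G : tpoly C l -> Prop) P N P' N' :
  in_ideal G (binom C P N) -> in_ideal G (binom C P' N') ->
  in_ideal G (binom C (addD P P') (addD N N')).
Proof.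
move=> H1 H2.
apply: (@ideal_peq _ _ _ _ (pmul [:: (1, (P', N'))] (binom C P N) ++
                            pmul [:: (1, (N, P))] (binom C P' N'))).
  move=> u; rewrite coef_cat !coef_pmul !big_cons !big_nil !coef_cons coef_nil /mm /=.
  rewrite (addDC P' P) (addDC N' N) (addDC N P') (addDC P N') !mul1r.
  have E : forall x : bool, (if x then (-1 : C) else 0) + (if x then 1 else 0) = 0.
    by case; rewrite ?addNr ?addr0.
  by rewrite !addr0 -addrA; congr (_ + _); rewrite addrA E add0r.
by apply: ideal_add; apply: ideal_mul.
Qed.

Lemma disj_D r l (n : 'I_l -> vec r) m (A A1 : divisor l) :
  (forall j, (A j)%:Z - (A1 j)%:Z = pairing m (n j)) ->
  (forall j, A j = 0 \/ A1 j = 0)%N -> A = Dplus n m /\ A1 = Dminus n m.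
Proof.
move=> Hm Hd; split; apply/ffunP => j; rewrite ffunE /= -Hm;
  case: ifP; move: (Hd j); lia.
Qed.

Lemma in_chamber0 r l (n : 'I_l -> vec r) s : in_chamber n s 0.
Proof. by move=> j; rewrite pairing0; case: (s j). Qed.

Lemma in_chamber_add r l (n : 'I_l -> vec r) s x y :
  in_chamber n s x -> in_chamber n s y -> in_chamber n s (x + y).
Proof.
move=> Hx Hy j; move: (Hx j) (Hy j); rewrite pairing_add.
by case: (s j) => a b; lia.
Qed.

Lemma D_add r l (n : 'I_l -> vec r) s x y :
  in_chamber n s x -> in_chamber n s y ->
  Dplus n (x + y) = addD (Dplus n x) (Dplus n y) /\
  Dminus n (x + y) = addD (Dminus n x) (Dminus n y).
Proof.
move=> Hx Hy; split; apply/ffunP => j; move: (Hx j) (Hy j); rewrite !ffunE /= pairing_add;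
  case: (s j) => a b; do 3 case: ifP; lia.
Qed.

Lemma D_zero r l (n : 'I_l -> vec r) : Dplus n 0 = zeroD l /\ Dminus n 0 = zeroD l.
Proof. by split; apply/ffunP => j; rewrite !ffunE pairing0. Qed.

Lemma nz_ray r l (n : 'I_l -> vec r) : complete_fan_rays n -> forall j, exists i, n j i != 0.
Proof.
move=> [Hp _ _] j; case: (boolP [exists i, n j i != 0]) => [/existsP[i Hi]|H].
  by exists i.
exfalso; have := Hp j 2%:Z; rewrite /=.
move=> H2; have : `|(2 : int)| = 1.
  apply: H2 => i; move: H; rewrite negb_exists => /forallP/(_ i); rewrite negbK => /eqP ->.
  exact: dvdz0.
by [].
Qed.

Lemma generic r l (n : 'I_l -> vec r) : complete_fan_rays n ->
  exists v : vec r, forall j, pairing v (n j) != 0.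
Proof.
move=> Hf.
pose P (j : 'I_l) : {poly int} := \sum_(i < r) (n j i)%:P * 'X^i.
have PE j x : (P j).[x] = \sum_(i < r) n j i * x ^+ i.
  by rewrite horner_sum; apply: eq_bigr => i _; rewrite hornerCM hornerXn.
have Pnz j : P j != 0.
  have [i0 Hi0] := nz_ray Hf j.
  apply/negP => /eqP H0; move: Hi0; apply/negP; rewrite negbK.
  have : (P j)`_i0 = 0 by rewrite H0 coef0.
  rewrite coef_sum (bigD1 i0) //= coefCM coefXn eqxx mulr1 big1 ?addr0 => [->//|].
  move=> i ne; rewrite coefCM coefXn.
  by case: eqP => [/val_inj e|]; [move: ne; rewrite e eqxx | rewrite mulr0].
pose Q := \prod_(j < l) P j.
have Qnz : Q != 0 by apply/prodf_neq0 => j _; apply: Pnz.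
pose rs := [seq k%:Z | k <- iota 0 (size Q)].
have : ~~ all (root Q) rs.
  apply/negP => Hall.
  have := max_poly_roots Qnz Hall.
  rewrite map_inj_uniq ?iota_uniq; last by move=> a b [].
  by rewrite size_map size_iota ltnn => /(_ isT).
move=> /allPn[x _ Hx].
exists [ffun i : 'I_r => x ^+ i] => j.
move: Hx; rewrite /root /Q horner_prod => /prodf_neq0 /(_ j isT).
rewrite PE /pairing; suff -> : \sum_(i < r) [ffun i0 : 'I_r => x ^+ i0] i * n j i = \sum_(i < r) n j i * x ^+ i by []; apply: eq_bigr => i _; by rewrite ffunE mulrC.
Qed.

Lemma chamber_exists r l (n : 'I_l -> vec r) : complete_fan_rays n ->
  forall m, exists s, is_chamber n s /\ in_chamber n s m.
Proof.
move=> Hf m; have [v Hv] := generic Hf.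
pose N : int := 1 + \sum_(j < l) `|pairing v (n j)|.
have HN j : `|pairing v (n j)| < N.
  rewrite /N (bigD1 j) //= addrCA ltrDl; apply: (lt_le_trans ltr01).
  by rewrite lerDl; apply: sumr_ge0 => i _; apply: normr_ge0.
have N1 : 1 <= N by rewrite /N lerDl; apply: sumr_ge0 => i _; apply: normr_ge0.
pose m' : vec r := [ffun i => N * m i + v i].
have Hm' j : pairing m' (n j) = N * pairing m (n j) + pairing v (n j).
  rewrite /pairing mulr_sumr -big_split; apply: eq_bigr => i _.
  by rewrite ffunE mulrDl mulrA.
exists (fun j => 0 < pairing m' (n j)); split.
  exists m' => j; case: ifP => // /negbT; rewrite Hm' -leNgt => H.
  have := HN j; have := Hv j; move: H.
  set a := pairing m (n j); set b := pairing v (n j) => H1 H2 H3.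
  rewrite lt_neqAle H1 andbT.
  apply/negP => /eqP H0.
  have [a0|a0] := eqVneq a 0.
    by move: H0 H2; rewrite a0 mulr0 add0r => ->; rewrite eqxx.
  move: H0 a0 H3 N1; nia.
move=> j; rewrite Hm'; have := HN j.
set a := pairing m (n j); set b := pairing v (n j) => H3.
case: ifP => H.
  rewrite leNgt; apply/negP => a0; move: H a0 H3 N1; nia.
rewrite leNgt; apply/negP => a0; move/negbT: H; rewrite -leNgt; move: a0 H3 N1; nia.
Qed.

Lemma sameclass_D r l (n : 'I_l -> vec r) m : sameclass n (Dplus n m) (Dminus n m).
Proof. by exists m => j; rewrite !ffunE /=; do 2 case: ifP; lia. Qed.

Lemma tele_sum (C : ringType) r l (n : 'I_l -> vec r) (G : tpoly C l -> Prop) s xs :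
  (forall x, x \in xs -> in_chamber n s x /\ in_ideal G (binom C (Dplus n x) (Dminus n x))) ->
  in_chamber n s (\sum_(x <- xs) x) /\
  in_ideal G (binom C (Dplus n (\sum_(x <- xs) x)) (Dminus n (\sum_(x <- xs) x))).
Proof.
elim: xs => [|x xs IH] H.
  rewrite big_nil; split; first exact: in_chamber0.
  have [-> ->] := D_zero n; exact: (ideal_peq (@binom_peq0 C l) (@ideal_nil C l G)).
have [Hx Ix] := H x (mem_head _ _).
have [Hs Is] := IH (fun y yin => H y (mem_behead (s := x :: xs) yin)).
rewrite big_cons; split; first exact: in_chamber_add.
have [-> ->] := D_add Hx Hs.
exact: binom_tele.
Qed.

Theorem mainTheorem2 (C : numClosedFieldType) (r l : nat) (n : 'I_l -> vec r)
  (Hfan : complete_fan_rays n)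
  (Xi : ('I_l -> bool) -> vec r -> Prop)
  (HXi : forall s, is_chamber n s -> semigroup_generators n s (Xi s)) :
  (forall p : tpoly C l, in_kernel n p <-> in_ideal (@gens1 C r l n) p) /\
  (forall p : tpoly C l, in_kernel n p <-> in_ideal (@gens2 C r l n Xi) p).
Proof.
split => p; split.
- apply: kernel_ideal => A A1 sAA _; apply: ideal_gen; by exists A, A1.
- exact: ideal1_kernel.
- apply: kernel_ideal => A A1 [m Hm] Hd.
  have [-> ->] := disj_D Hm Hd.
  have [s [Hs Hin]] := chamber_exists Hfan m.
  have [Hsub Hgen] := HXi s Hs.
  have [xs [Hxs ->]] := Hgen m Hin.
  suff [_ Hi] : in_chamber n s (\sum_(x <- xs) x) /\
     in_ideal (@gens2 C r l n Xi) (binom C (Dplus n (\sum_(x <- xs) x)) (Dminus n (\sum_(x <- xs) x))) by exact: Hi.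
  apply: tele_sum => x xin; split; first exact: Hsub (Hxs x xin).
  by apply: ideal_gen; exists s, x; split => //; apply: Hxs.
- move=> H; apply: ideal1_kernel; apply: ideal_mono H => g [s [m [_ _ ->]]].
  by exists (Dplus n m), (Dminus n m); split => //; apply: sameclass_D.
Qed.
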